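(* Let $n\geq 3$ and let $A_n$ be the graph with vertices $\{1,\dots,n\}$ and edges $\{i,i+1\}$ for $1\leq i\leq n-1$. Then $$\#\mathcal{P}_d(\mathcal{E}_{A_n})=\begin{cases}2n-2d & \text{if } 3\leq d\leq n-1,\\ 0 & \text{if } d\geq n,\end{cases}$$ and $\mathcal{P}_2(\mathcal{E}_{A_n})$ is a union of $2n-6$ copies of $\mathbb{P}^1$ if $n>3$, and consists of two points if $n=3$.
   Context: Work over an algebraically closed field $k$. The Fomin–Kirillov algebra $\mathcal{E}_n$ is the graded $k$-algebra generated by degree-$1$ elements $x_{ij}$, $1\leq i<j\leq n$, subject to: $x_{ij}^2=0$; $x_{ij}x_{kl}=x_{kl}x_{ij}$ whenever $\{i,j\}\cap\{k,l\}=\emptyset$; $x_{ij}x_{jk}-x_{jk}x_{ik}-x_{ik}x_{ij}=0$ and $x_{jk}x_{ij}-x_{ik}x_{jk}-x_{ij}x_{ik}=0$ for $i<j<k$. For a graph $G$ on $\{1,\dots,n\}$, $\mathcal{E}_G$ is the subalgebra of $\mathcal{E}_n$ generated by the $x_{ij}$ with $\{i,j\}$ an edge of $G$. For a connected graded algebra $A=k\langle x_1,\dots,x_r\rangle/I$ generated in degree $1$, a degree-$d$ truncated point module is a graded cyclic module $M=ke_0\oplus\cdots\oplus ke_d$ generated by $e_0$; writing $x_i e_j=\lambda_i^j e_{j+1}$, such modules correspond bijectively to points $([\lambda_1^0:\cdots:\lambda_r^0],\dots,[\lambda_1^{d-1}:\cdots:\lambda_r^{d-1}])\in(\mathbb{P}^{r-1})^{\times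 d}$ satisfying the multilinearized relations (each homogeneous relation $\sum_I c_I x_{i_1}\cdots x_{i_t}$ yields $\sum_I c_I\lambda_{i_1}^{s+t-1}\cdots\lambda_{i_t}^{s}=0$ for $0\leq s\leq d-t$). $\mathcal{P}_d(A)$ denotes this subset of $(\mathbb{P}^{r-1})^{\times d}$; here $A=\mathcal{E}_{A_n}$ with generators $x_{i,i+1}$, $1\leq i\leq n-1$. *)

(* Defs.v *)
From HB Require Import structures.
From mathcomp Require Import all_boot all_algebra.

Set Implicit Arguments.
Unset Strict Implicit.
Unset Printing Implicit Defensive.

Import GRing.Theory.
Local Open Scope ring_scope.

Section NonCommPoly.
Variable k : fieldType.

(** Noncommutative polynomials over an alphabet [A]: formal finite
    k-linear combinations of words, as lists of (coefficient, word).
    Two such lists denote the same element iff they have the same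
    coefficient function [ncoef]. *)
Section Alphabet.
Variable A : eqType.

Definition ncpoly := seq (k * seq A).

Definition ncoef (p : ncpoly) (w : seq A) : k :=
  \sum_(cw <- p | cw.2 == w) cw.1.

Definition nceq (p q : ncpoly) : Prop := forall w, ncoef p w = ncoef q w.

Definition ncone : ncpoly := [:: (1, [::])].

Definition ncmul (p q : ncpoly) : ncpoly :=
  [seq (cw.1 * dv.1, cw.2 ++ dv.2) | cw <- p, dv <- q].

Definition ncopp (p : ncpoly) : ncpoly := [seq (- cw.1, cw.2) | cw <- p].

Definition ncsub (p q : ncpoly) : ncpoly := p ++ ncopp q.

Definition in_ideal (R : ncpoly -> Prop) (f : ncpoly) : Prop :=
  exists L : seq (ncpoly * ncpoly * ncpoly),
    (forall x, x \in L -> R x.1.2) /\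
    nceq f (flatten [seq ncmul (ncmul x.1.1 x.1.2) x.2 | x <- L]).

Definition homog (t : nat) (f : ncpoly) : Prop :=
  forall cw, cw \in f -> size cw.2 = t.

End Alphabet.

(** ---- The Fomin--Kirillov algebra E_n ----
    Vertices are 0,...,n-1 (the paper's 1,...,n shifted by one).
    Generators x_{ij}, i < j < n. *)
Definition FKgen (n : nat) := {p : nat * nat | (p.1 < p.2) && (p.2 < n)}%N.

(** the generator x_{ij} as a polynomial (zero if (i,j) is not a valid pair) *)
Definition xg (n i j : nat) : ncpoly (FKgen n) :=
  if @insub _ _ (FKgen n) (i, j) is Some g then [:: (1, [:: g])] else [::].

Definition FKrel (n : nat) (r : ncpoly (FKgen n)) : Prop :=
  (exists i j, (i < j < n)%N /\ r = ncmul (xg n i j) (xg n i j))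
  \/ (exists i j a b, (i < j < n)%N /\ (a < b < n)%N /\
        [&& i != a, i != b, j != a & j != b]%N /\
        r = ncsub (ncmul (xg n i j) (xg n a b)) (ncmul (xg n a b) (xg n i j)))
  \/ (exists i j l, (i < j < l)%N /\ (l < n)%N /\
        r = ncsub (ncsub (ncmul (xg n i j) (xg n j l)) (ncmul (xg n j l) (xg n i l)))
                  (ncmul (xg n i l) (xg n i j)))
  \/ (exists i j l, (i < j < l)%N /\ (l < n)%N /\
        r = ncsub (ncsub (ncmul (xg n j l) (xg n i j)) (ncmul (xg n i l) (xg n j l)))
                  (ncmul (xg n i j) (xg n i l))).

(** ---- E_{A_n} = subalgebra generated by y_i := x_{i,i+1}, i < n-1 ----
    presented as k<y_0,...,y_{n-2}> / I with I the kernel of y_i |-> x_{i,i+1}. *)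
Definition An_word (n : nat) (w : seq 'I_(n.-1)) : ncpoly (FKgen n) :=
  foldr (fun (a : 'I_(n.-1)) acc => ncmul (xg n a a.+1) acc) (ncone _) w.

Definition An_subst (n : nat) (f : ncpoly 'I_(n.-1)) : ncpoly (FKgen n) :=
  flatten [seq ncmul [:: (cw.1, [::])] (@An_word n cw.2) | cw <- f].

Definition An_rel (n : nat) (f : ncpoly 'I_(n.-1)) : Prop :=
  in_ideal (@FKrel n) (@An_subst n f).

(** ---- Truncated point modules ----
    A tuple of d points of P^{r-1} is represented by lam : nat -> 'I_r -> k,
    lam j being a representative of the j-th point (j < d). *)
Definition pt (r : nat) := nat -> 'I_r -> k.

Definition nonzero_pt (r d : nat) (lam : pt r) : Prop :=
  forall j, (j < d)%N -> exists i, lam j i != 0.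

Definition pequiv (r d : nat) (lam mu : pt r) : Prop :=
  forall j, (j < d)%N -> exists c : k, c != 0 /\ forall i, mu j i = c * lam j i.

(** evaluation of the multilinearized word: for w = i_1 ... i_t,
    lam^{s+t-1}_{i_1} * ... * lam^{s}_{i_t} *)
Fixpoint evalw (r : nat) (lam : pt r) (s : nat) (w : seq 'I_r) : k :=
  if w is a :: w' then lam (s + size w')%N a * evalw lam s w' else 1.

Definition Pd (r : nat) (I : ncpoly 'I_r -> Prop) (d : nat) (lam : pt r) : Prop :=
  nonzero_pt d lam /\
  forall (t s : nat) (f : ncpoly 'I_r), homog t f -> I f -> (s + t <= d)%N ->
    \sum_(cw <- f) cw.1 * evalw lam s cw.2 = 0.

Definition has_npoints (r d : nat) (P : pt r -> Prop) (N : nat) : Prop :=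
  exists L : 'I_N -> pt r,
    (forall a, P (L a)) /\
    (forall a b, pequiv d (L a) (L b) -> a = b) /\
    (forall lam, P lam -> exists a, pequiv d (L a) lam).

(** Copies of P^1 in (P^{r-1})^d: images of [s:t] |-> ( [s u_j + t v_j] )_j,
    where in the factors with flag c j = true the map is constant [u_j],
    and otherwise u_j, v_j are linearly independent (a linear embedding);
    at least one factor is non-constant. *)
Definition lin_indep (r : nat) (u v : 'I_r -> k) : Prop :=
  forall a b : k, (forall i, a * u i + b * v i = 0) -> a = 0 /\ b = 0.

Definition good_line (r d : nat) (u v : pt r) (c : nat -> bool) : Prop :=
  (forall j, (j < d)%N -> if c j then exists i, u j i != 0 else lin_indep (u j) (v j))
  /\ exists j, (j < d)%N /\ c j = false.

Definition on_line (r d : nat) (u v : pt r) (c : nat -> bool) (lam : pt r) : Prop :=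
  exists s t : k, (s != 0 \/ t != 0) /\
    pequiv d (fun j i => if c j then u j i else s * u j i + t * v j i) lam.

Definition union_of_P1s (r d : nat) (P : pt r -> Prop) (m : nat) : Prop :=
  exists (U V : 'I_m -> pt r) (C : 'I_m -> nat -> bool),
    (forall a, good_line d (U a) (V a) (C a)) /\
    (forall a b, (forall lam, on_line d (U a) (V a) (C a) lam <->
                              on_line d (U b) (V b) (C b) lam) -> a = b) /\
    (forall lam, P lam <-> exists a, on_line d (U a) (V a) (C a) lam).

End NonCommPoly.

Definition Pd_An (k : fieldType) (n d : nat) : pt k n.-1 -> Prop :=
  Pd (@An_rel k n) d.
Arguments Pd_An k n d : clear implicits.

(* Main.v *)
Require Import Defs.
From mathcomp Require Import all_boot all_algebra.
From mathcomp Require Import ring zify.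
From Stdlib Require Import Classical ClassicalEpsilon FunctionalExtensionality.
Set Implicit Arguments.
Unset Strict Implicit.
Unset Printing Implicit Defensive.
Import GRing.Theory.
Local Open Scope ring_scope.

Section Gen.
Variable k : fieldType.
Variable A : eqType.

Definition Phi (psi : seq A -> k) (p : ncpoly k A) : k :=
  \sum_(cw <- p) cw.1 * psi cw.2.

Lemma Phi_ncoef psi (p : ncpoly k A) s : uniq s -> {subset map snd p <= s} ->
  Phi psi p = \sum_(w <- s) ncoef p w * psi w.
Proof.
move=> us Hs; rewrite /Phi /ncoef.
rewrite (eq_bigr (fun w => \sum_(cw <- p) (if cw.2 == w then cw.1 * psi w else 0))); last first.
  by move=> w _; rewrite big_distrl /= big_mkcond /=; apply: eq_bigr => cw _; case: eqP; rewrite ?mul0r.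
rewrite exchange_big /=; apply: eq_big_seq => cw cwp.
have ins : cw.2 \in s by apply: Hs; apply: map_f.
rewrite (big_rem _ ins) /= eqxx big1_seq ?addr0 // => w /andP[_ wi].
case: eqP => // e; move: wi; rewrite -e.
by rewrite mem_rem_uniqF.
Qed.

Lemma Phi_nceq psi (p q : ncpoly k A) : nceq p q -> Phi psi p = Phi psi q.
Proof.
move=> e; set s := undup (map snd (p ++ q)).
have us : uniq s by apply: undup_uniq.
rewrite (@Phi_ncoef _ _ s) // ?(@Phi_ncoef _ q s) //.
- by apply: eq_bigr => w _; rewrite e.
- by move=> w wi; rewrite mem_undup map_cat mem_cat wi orbT.
- by move=> w wi; rewrite mem_undup map_cat mem_cat wi.
Qed.

Lemma Phi_cat psi (p q : ncpoly k A) : Phi psi (p ++ q) = Phi psi p + Phi psi q.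
Proof. by rewrite /Phi big_cat. Qed.

Lemma Phi_flatten psi (L : seq (ncpoly k A)) :
  Phi psi (flatten L) = \sum_(p <- L) Phi psi p.
Proof. by rewrite /Phi big_flatten. Qed.

Lemma big_ncmul (F : k * seq A -> k) (p q : ncpoly k A) :
  \sum_(x <- ncmul p q) F x = \sum_(a <- p) \sum_(b <- q) F (a.1 * b.1, a.2 ++ b.2).
Proof.
elim: p => [|a p IH]; first by rewrite /ncmul /= !big_nil.
by rewrite big_cons -IH /ncmul /= big_cat big_map.
Qed.

Lemma Phi_mul3 psi (u r v : ncpoly k A) :
  Phi psi (ncmul (ncmul u r) v) =
  \sum_(cu <- u) \sum_(cv <- v) cu.1 * cv.1 *
     \sum_(cr <- r) cr.1 * psi (cu.2 ++ cr.2 ++ cv.2).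
Proof.
rewrite /Phi big_ncmul big_ncmul /=.
apply: eq_bigr => cu _; rewrite exchange_big /=.
apply: eq_bigr => cv _; rewrite big_distrr /=; apply: eq_bigr => cr _.
by rewrite catA; ring.
Qed.

Definition kills (R : ncpoly k A -> Prop) (psi : seq A -> k) :=
  forall r, R r -> forall U V, \sum_(cr <- r) cr.1 * psi (U ++ cr.2 ++ V) = 0.

Lemma Phi_ideal R psi f : kills R psi -> in_ideal R f -> Phi psi f = 0.
Proof.
move=> K [L [HL e]]; rewrite (Phi_nceq psi e) Phi_flatten big_map.
rewrite big1_seq // => x /andP[_ xL]; rewrite Phi_mul3.
rewrite big1_seq // => cu _; rewrite big1_seq // => cv _.
by rewrite K ?mulr0 //; apply: HL.
Qed.

End Gen.

Section AnSubst.
Variable k : fieldType.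
Variable n : nat.

Lemma ygP (a : 'I_(n.-1)) : ((val a < (val a).+1) && ((val a).+1 < n))%N.
Proof. have := ltn_ord a; rewrite ltnSn /=; lia. Qed.

Definition yg (a : 'I_(n.-1)) : FKgen n := Sub (val a, (val a).+1) (ygP a).

Lemma xg_y (a : 'I_(n.-1)) : xg k n a (val a).+1 = [:: (1, [:: yg a])].
Proof. by rewrite /xg (@insubT _ (fun p : nat * nat => (p.1 < p.2)%N && (p.2 < n)%N) _ (val a, (val a).+1) (ygP a)). Qed.

Lemma An_word_y (w : seq 'I_(n.-1)) : An_word k w = [:: (1, map yg w)].
Proof.
elim: w => [|a w IH] //=; rewrite IH xg_y /ncmul /= mulr1 //.
Qed.

Lemma Phi_An_subst psi (f : ncpoly k 'I_(n.-1)) :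
  Phi psi (An_subst f) = \sum_(cw <- f) cw.1 * psi (map yg cw.2).
Proof.
rewrite /An_subst Phi_flatten big_map; apply: eq_bigr => cw _.
by rewrite An_word_y /ncmul /Phi /= big_cons big_nil mulr1 addr0.
Qed.

Lemma Pd_of_psi d (lam : pt k n.-1) :
  nonzero_pt d lam ->
  (forall s t, (s + t <= d)%N -> exists psi : seq (FKgen n) -> k,
      kills (@FKrel k n) psi /\
      forall w : seq 'I_(n.-1), size w = t -> psi (map yg w) = evalw lam s w) ->
  Pd (@An_rel k n) d lam.
Proof.
move=> nz H; split=> // t s f hf If le.
have [psi [K E]] := H s t le.
have := Phi_ideal K If; rewrite Phi_An_subst => E0.
rewrite -[RHS]E0; apply: eq_big_seq => cw cwf; rewrite E //; exact: hf.
Qed.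

End AnSubst.

Lemma ncoefE (k : fieldType) (A : eqType) (p : ncpoly k A) w :
  ncoef p w = \sum_(cw <- p) cw.1 * (cw.2 == w)%:R.
Proof.
rewrite /ncoef big_mkcond /=; apply: eq_bigr => cw _.
by case: eqP; rewrite ?mulr1 ?mulr0.
Qed.

Section Rels.
Variable k : fieldType.
Variable n : nat.

Lemma relQ1 (a : 'I_(n.-1)) : An_rel (n:=n) [:: (1 : k, [:: a; a])].
Proof.
exists [:: (ncone _ _, ncmul (xg k n a (val a).+1) (xg k n a (val a).+1), ncone _ _)].
split.
  move=> x; rewrite inE => /eqP -> /=; left; exists (val a), (val a).+1.
  split=> //; have := ltn_ord a; rewrite ltnSn /=; lia.
move=> w; rewrite /An_subst /= xg_y /ncmul /ncone /= !ncoefE !big_cons !big_nil.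
rewrite /=. ring.
Qed.

Lemma xg_some (i j : nat) : (i < j < n)%N -> exists g, xg k n i j = [:: (1, [:: g])].
Proof.
move=> h; rewrite /xg.
case: insubP => [g _ _|]; first by exists g.
by rewrite h.
Qed.

Lemma relQ2 (a b : 'I_(n.-1)) : ((val a).+2 <= val b)%N ->
  An_rel (n:=n) [:: (1 : k, [:: a; b]); (-1, [:: b; a])].
Proof.
move=> hab; have ea : nat_of_ord a = val a := erefl; have eb : nat_of_ord b = val b := erefl; have ha := ltn_ord a; have hb := ltn_ord b.
exists [:: (ncone _ _, ncsub (ncmul (xg k n a (val a).+1) (xg k n b (val b).+1))
                          (ncmul (xg k n b (val b).+1) (xg k n a (val a).+1)), ncone _ _)].
split.
  move=> x; rewrite inE => /eqP -> /=; right; left.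
  exists (val a), (val a).+1, (val b), (val b).+1; split; [|split; [|split=> //]].
  - rewrite ltnSn /=; lia.
  - rewrite ltnSn /=; lia.
  - apply/and4P; split; apply/eqP; lia.
move=> w; rewrite /An_subst /=.
have [g1 ->] := @xg_some a (val a).+1 ltac:(rewrite ltnSn /=; lia).
have [g2 ->] := @xg_some b (val b).+1 ltac:(rewrite ltnSn /=; lia).
rewrite /ncsub /ncopp /ncmul /ncone /= !ncoefE !big_cons !big_nil /=.
ring.
Qed.

Lemma relB (a b : 'I_(n.-1)) : val b = (val a).+1 ->
  An_rel (n:=n) [:: (1 : k, [:: a; b; a]); (-1, [:: b; a; b])].
Proof.
move=> hab; have ea : nat_of_ord a = val a := erefl; have eb : nat_of_ord b = val b := erefl; have ha := ltn_ord a; have hb : ((val a).+1 < n.-1)%N by rewrite -hab; exact: ltn_ord.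
pose x := xg k n a (val a).+1.
pose y := xg k n (val a).+1 (val a).+2.
pose z := xg k n a (val a).+2.
pose R3 := ncsub (ncsub (ncmul x y) (ncmul y z)) (ncmul z x).
exists [:: (z, ncmul x x, ncone _ _); ([:: (-1, [::])], ncmul y y, z);
           (ncone _ _, R3, x); (ncopp y, R3, ncone _ _)].
split.
  move=> c; rewrite !inE => /or4P [] /eqP -> /=.
  - left; exists (val a), (val a).+1; split=> //; rewrite ltnSn /=; lia.
  - left; exists (val a).+1, (val a).+2; split=> //; rewrite ltnSn /=; lia.
  - right; right; left; exists (val a), (val a).+1, (val a).+2; split; [|split=> //].
    + rewrite !ltnSn /=; lia.
    + lia.
  - right; right; left; exists (val a), (val a).+1, (val a).+2; split; [|split=> //].
    + rewrite !ltnSn /=; lia.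
    + lia.
rewrite /R3 /x /y /z.
move=> w; rewrite /An_subst /= hab.
have [g1 ->] := @xg_some a (val a).+1 ltac:(rewrite ltnSn /=; lia).
have [g2 ->] := @xg_some (val a).+1 (val a).+2 ltac:(rewrite ltnSn /=; lia).
have [g3 ->] := @xg_some a (val a).+2 ltac:(lia).
rewrite /ncsub /ncopp /ncmul /ncone /= !ncoefE !big_cons !big_nil /=.
ring.
Qed.

End Rels.

Definition lamN (k : fieldType) (r : nat) (lam : pt k r) (j i : nat) : k :=
  if @insub _ _ 'I_r i is Some o then lam j o else 0.

Lemma lamN_val (k : fieldType) r (lam : pt k r) j (o : 'I_r) : lamN lam j o = lam j o.
Proof. by rewrite /lamN valK. Qed.

Lemma lamN_out (k : fieldType) r (lam : pt k r) j i : (r <= i)%N -> lamN lam j i = 0.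
Proof. by move=> h; rewrite /lamN insubN // -leqNgt. Qed.

Section Eqs.
Variable k : fieldType.
Variable n : nat.
Variable d : nat.
Variable lam : pt k n.-1.
Hypothesis HP : Pd (@An_rel k n) d lam.

Lemma eqQ1 j i : (j + 2 <= d)%N -> lamN lam j.+1 i * lamN lam j i = 0.
Proof.
move=> hj; case: (ltnP i n.-1) => hi; last by rewrite lamN_out ?mul0r.
pose o := Ordinal hi; have -> : i = val o by [].
rewrite !lamN_val.
have hom : homog 2%N [:: (1 : k, [:: o; o])] by move=> cw; rewrite inE => /eqP ->.
have := HP.2 2%N j _ hom (@relQ1 k n o) hj.
by rewrite big_cons big_nil /= addn1 addn0 !mul1r mulr1 addr0.
Qed.

Lemma eqQ2 j a b : (j + 2 <= d)%N -> (a.+2 <= b)%N ->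
  lamN lam j.+1 a * lamN lam j b = lamN lam j.+1 b * lamN lam j a.
Proof.
move=> hj hab; case: (ltnP b n.-1) => hb; last by rewrite !(@lamN_out _ _ _ _ b) ?mulr0 ?mul0r.
have ha : (a < n.-1)%N by lia.
pose oa := Ordinal ha; pose ob := Ordinal hb.
have -> : a = val oa by []. have -> : b = val ob by [].
rewrite !lamN_val.
have hom : homog 2%N [:: (1 : k, [:: oa; ob]); (-1, [:: ob; oa])]
  by move=> cw; rewrite !inE => /orP [] /eqP ->.
have := HP.2 2%N j _ hom (@relQ2 k n oa ob hab) hj.
rewrite !big_cons big_nil /= addn1 addn0 !mul1r !mulr1 addr0 mulN1r => h.
by apply/eqP; rewrite -subr_eq0 h.
Qed.

Lemma eqB j i : (j + 3 <= d)%N ->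
  lamN lam j.+2 i * lamN lam j.+1 i.+1 * lamN lam j i =
  lamN lam j.+2 i.+1 * lamN lam j.+1 i * lamN lam j i.+1.
Proof.
move=> hj; case: (ltnP i.+1 n.-1) => hb; last by rewrite !(@lamN_out _ _ _ _ i.+1) ?mulr0 ?mul0r.
have ha : (i < n.-1)%N by lia.
pose oa := Ordinal ha; pose ob := Ordinal hb.
have -> : i.+1 = val ob by []. have -> : i = val oa by [].
rewrite !lamN_val.
have hom : homog 3%N [:: (1 : k, [:: oa; ob; oa]); (-1, [:: ob; oa; ob])]
  by move=> cw; rewrite !inE => /orP [] /eqP ->.
have := HP.2 3%N j _ hom (@relB k n oa ob erefl) hj.
rewrite !big_cons big_nil /= !addn1 !addn2 addn0 !mul1r !mulr1 addr0 mulN1r => h.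
by apply/eqP; rewrite -subr_eq0 -!mulrA h.
Qed.

End Eqs.


Definition fires (i j : nat) (S : nat -> bool) : bool :=
  [&& ~~ S i, ~~ S j & all S (iota i.+1 (j - i.+1))].

Definition addS (i : nat) (S : nat -> bool) : nat -> bool := fun x => (x == i) || S x.

Lemma firesP i j S : reflect [/\ S i = false, S j = false & forall m, (i < m < j)%N -> S m]
  (fires i j S).
Proof.
apply: (iffP and3P) => [[/negbTE -> /negbTE -> /allP H]|[-> -> H]]; split=> //.
  by move=> m hm; apply: H; rewrite mem_iota; lia.
by apply/allP => m; rewrite mem_iota => hm; apply: H; lia.
Qed.

Lemma addSC i a S : addS i (addS a S) = addS a (addS i S).
Proof. by apply: functional_extensionality => x; rewrite /addS orbCA. Qed.

Lemma addS_neq i S x : x != i -> addS i S x = S x.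
Proof. by rewrite /addS => /negbTE ->. Qed.

Lemma addS_eq i S : addS i S i = true.
Proof. by rewrite /addS eqxx. Qed.

Lemma fires_addS_self i j S : fires i j (addS i S) = false.
Proof. by apply/firesP => -[]; rewrite /addS eqxx. Qed.

Lemma fires_addS_tgt i j S : fires i j (addS j S) = false.
Proof. by apply/firesP => -[_]; rewrite /addS eqxx. Qed.

Lemma comm_imp i j a b S : (i < j)%N -> (a < b)%N -> i != a -> i != b -> j != a -> j != b ->
  fires a b S -> fires i j (addS a S) -> fires i j S && fires a b (addS i S).
Proof.
move=> ij ab ia ib ja jb /firesP [Sa Sb Hab] /firesP [Si Sj Hij].
rewrite addS_neq // in Si; rewrite addS_neq // in Sj.
apply/andP; split; apply/firesP; split=> //.
- move=> m hm; have := Hij m hm; case: (eqVneq m a) => [ma|mna]; last by rewrite addS_neq.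
  subst m; case: (ltngtP b j) => hbj.
  + have := Hij b ltac:(lia); rewrite addS_neq ?Sb //; apply/eqP; lia.
  + by have := Hab j ltac:(lia); rewrite Sj.
  + by move: jb; rewrite hbj eqxx.
- by rewrite addS_neq // eq_sym.
- by rewrite addS_neq // eq_sym.
- by move=> m hm; rewrite /addS Hab // orbT.
Qed.

Lemma comm_eq i j a b S : (i < j)%N -> (a < b)%N -> i != a -> i != b -> j != a -> j != b ->
  fires a b S && fires i j (addS a S) = fires i j S && fires a b (addS i S).
Proof.
move=> ij ab ia ib ja jb; apply/idP/idP => /andP [h1 h2].
  exact: comm_imp.
apply: (@comm_imp a b i j) => //; by rewrite eq_sym.
Qed.

Lemma R3b i j l S : (i < j < l)%N -> fires i l S && fires j l (addS i S) = false.
Proof.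
move=> h; apply/negbTE/negP => /andP [/firesP [_ _ H] /firesP [Sj _ _]].
by move: Sj; rewrite /addS H ?orbT //; lia.
Qed.

Lemma R4eq i j l S : (i < j < l)%N ->
  fires i j S && fires j l (addS i S) = fires j l S && fires i l (addS j S).
Proof.
move=> h; have ij : j != i by apply/eqP; lia.
have li : l != i by apply/eqP; lia.
have lj : l != j by apply/eqP; lia.
apply/idP/idP.
- move=> /andP [/firesP [Si Sj Hij] /firesP [Sj' Sl Hjl]].
  rewrite addS_neq // in Sl.
  apply/andP; split; apply/firesP; split=> //.
  + move=> m hm; have := Hjl m hm; rewrite addS_neq //; apply/eqP; lia.
  + by rewrite addS_neq // eq_sym.
  + by rewrite addS_neq.
  + move=> m hm; case: (eqVneq m j) => [->|mj]; first by rewrite addS_eq.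
    rewrite addS_neq //; case: (ltngtP m j) => hmj.
    * by apply: Hij; lia.
    * have := Hjl m ltac:(lia); rewrite addS_neq //; apply/eqP; lia.
    * by move: mj; rewrite hmj eqxx.
- move=> /andP [/firesP [Sj Sl Hjl] /firesP [Si Sl' Hil]].
  rewrite addS_neq 1?eq_sym // in Si.
  apply/andP; split; apply/firesP; split=> //.
  + move=> m hm; have := Hil m ltac:(lia); rewrite addS_neq //; apply/eqP; lia.
  + by rewrite addS_neq.
  + by rewrite addS_neq.
  + by move=> m hm; rewrite /addS Hjl // orbT.
Qed.

Section Act.
Variable n : nat.

Definition act1 (g : FKgen n) (S : nat -> bool) : option (nat -> bool) :=
  if fires (val g).1 (val g).2 S then Some (addS (val g).1 S) else None.

Definition act (w : seq (FKgen n)) (S : nat -> bool) : option (nat -> bool) :=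
  foldr (fun g o => obind (act1 g) o) (Some S) w.

Lemma act_cat U V S : act (U ++ V) S = obind (act U) (act V S).
Proof.
elim: U => [|g U IH] /=; first by case: (act V S).
by rewrite IH; case: (act V S).
Qed.

Lemma act_pair g h S : obind (act1 g) (act1 h S) =
  if fires (val h).1 (val h).2 S && fires (val g).1 (val g).2 (addS (val h).1 S)
  then Some (addS (val g).1 (addS (val h).1 S)) else None.
Proof.
rewrite /act1; case: (fires _ _ S) => //=.
Qed.

End Act.

Lemma xg_some2 (k : fieldType) n (i j : nat) : (i < j < n)%N ->
  exists g : FKgen n, val g = (i, j) /\ xg k n i j = [:: (1, [:: g])].
Proof.
move=> h; rewrite /xg.
case: insubP => [g _ vg|]; first by exists g.
by rewrite h.
Qed.

Lemma rel_kill (k : fieldType) n (r : ncpoly k (FKgen n)) (rv : bool) S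
    (H : option (nat -> bool) -> k) :
  FKrel r -> H None = 0 ->
  \sum_(cr <- r) cr.1 * H (act (if rv then rev cr.2 else cr.2) S) = 0.
Proof.
move=> [[i [j [h ->]]] | [[i [j [a [b [h1 [h2 [hd ->]]]]]]] | [[i [j [l [h1 [h2 ->]]]]] | [i [j [l [h1 [h2 ->]]]]]]]] H0.
- have [g [vg ->]] := xg_some2 k h.
  rewrite /ncmul /= big_cons big_nil.
  by case: rv; rewrite /= act_pair vg /= fires_addS_self andbF H0 mulr0 addr0.
- have [g [vg ->]] := xg_some2 k h1.
  have [g' [vg' ->]] := xg_some2 k h2.
  case/and4P: hd => ia ib ja jb.
  have ij : (i < j)%N by case/andP: h1.
  have ab : (a < b)%N by case/andP: h2.
  rewrite /ncsub /ncopp /ncmul /= !big_cons big_nil.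
  case: rv; rewrite /= !act_pair vg vg' /=.
  + rewrite (comm_eq S ij ab ia ib ja jb) [addS a (addS i S)]addSC; ring.
  + rewrite (comm_eq S ij ab ia ib ja jb) [addS a (addS i S)]addSC; ring.
- case/andP: (h1) => hij hjl.
  have [g1 [v1 ->]] := xg_some2 k (n:=n) (i:=i) (j:=j) ltac:(apply/andP; split; lia).
  have [g2 [v2 ->]] := xg_some2 k (n:=n) (i:=j) (j:=l) ltac:(apply/andP; split; lia).
  have [g3 [v3 ->]] := xg_some2 k (n:=n) (i:=i) (j:=l) ltac:(apply/andP; split; lia).
  rewrite /ncsub /ncopp /ncmul /= !big_cons big_nil.
  case: rv; rewrite /= !act_pair v1 v2 v3 /=.
  + rewrite (R4eq S h1) [addS j (addS i S)]addSC !fires_addS_self !andbF H0; ring.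
  + rewrite fires_addS_tgt (R3b S h1) fires_addS_self !andbF H0; ring.
- case/andP: (h1) => hij hjl.
  have [g1 [v1 ->]] := xg_some2 k (n:=n) (i:=i) (j:=j) ltac:(apply/andP; split; lia).
  have [g2 [v2 ->]] := xg_some2 k (n:=n) (i:=j) (j:=l) ltac:(apply/andP; split; lia).
  have [g3 [v3 ->]] := xg_some2 k (n:=n) (i:=i) (j:=l) ltac:(apply/andP; split; lia).
  rewrite /ncsub /ncopp /ncmul /= !big_cons big_nil.
  case: rv; rewrite /= !act_pair v1 v2 v3 /=.
  + rewrite fires_addS_tgt (R3b S h1) fires_addS_self !andbF H0; ring.
  + rewrite (R4eq S h1) [addS j (addS i S)]addSC !fires_addS_self !andbF H0; ring.
Qed.

Definition emptyS : nat -> bool := fun _ => false.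
Definition intv (c e : nat) : nat -> bool := fun x => (c <= x < e)%N.

Definition Gind (k : fieldType) (T : nat -> bool) (o : option (nat -> bool)) : k :=
  if excluded_middle_informative (o = Some T) then 1 else 0.

Definition psiC (k : fieldType) n (T : nat -> bool) (rv : bool) (W : seq (FKgen n)) : k :=
  Gind k T (act (if rv then rev W else W) emptyS).

Lemma Gind0 (k : fieldType) T : Gind k T None = 0.
Proof. by rewrite /Gind; case: excluded_middle_informative. Qed.

Lemma psiC_kills (k : fieldType) n T rv : kills (@FKrel k n) (psiC k T rv).
Proof.
move=> r Hr U V; rewrite /psiC.
case: rv.
- under eq_bigr do rewrite !rev_cat !act_cat.
  case: (act (rev U) emptyS) => [S|] /=.
  + under eq_bigr do rewrite act_cat.
    exact: (@rel_kill k n r true S (fun o => Gind k T (obind (act (rev V)) o)) Hr (Gind0 k T)).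
  + by rewrite big1 // => cr _; rewrite Gind0 mulr0.
- under eq_bigr do rewrite !act_cat.
  case: (act V emptyS) => [S|] /=.
  + exact: (@rel_kill k n r false S (fun o => Gind k T (obind (act U) o)) Hr (Gind0 k T)).
  + by rewrite big1 // => cr _; rewrite Gind0 mulr0.
Qed.

Section Chain.
Variable n : nat.

Lemma act1_yg (a : 'I_(n.-1)) S :
  act1 (yg a) S = if ~~ S a && ~~ S (val a).+1 then Some (addS a S) else None.
Proof. by rewrite /act1 /= /fires subnn /= andbT. Qed.

Lemma rev_iotaS c t : rev (iota c t.+1) = (c + t)%N :: rev (iota c t).
Proof. by rewrite -addn1 iotaD rev_cat. Qed.

Lemma chain_act (w : seq 'I_(n.-1)) c :
  act (map (@yg n) w) emptyS = Some (intv c (c + size w)) <->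
  map val w = rev (iota c (size w)).
Proof.
elim: w => [|a w IH] /=.
  split=> // _; congr Some; apply: functional_extensionality => x.
  by rewrite /intv addn0 /emptyS; case: leqP => //= h; rewrite ltnNge h.
rewrite rev_iotaS; split.
- case E: (act (map (@yg n) w) emptyS) => [S'|] //=.
  rewrite act1_yg; case: ifP => // /andP [/negbTE Sa /negbTE Sa1] [EE].
  have hx : forall x, x != val a -> S' x = intv c (c + (size w).+1) x.
    by move=> x hx; rewrite -EE addS_neq.
  have ha : val a = (c + size w)%N.
    have := EE; move/(congr1 (fun f => f (val a))); rewrite addS_eq /intv => /esym/andP [h1 h2].
    case: (ltnP (val a).+1 (c + (size w).+1)) => h3; last by lia.
    have := hx (val a).+1 ltac:(apply/eqP; lia); rewrite Sa1 /intv; lia.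
  have: S' = intv c (c + size w).
    apply: functional_extensionality => x; case: (eqVneq x (val a)) => [->|xa].
      by rewrite Sa /intv ha ltnn andbF.
    by rewrite hx // /intv; move/eqP: xa; rewrite ha; lia.
  move=> eS; rewrite eS in E; have := IH.1 E => ->.
  by rewrite ha.
- case=> ha hw; have := IH.2 hw => ->; rewrite /= act1_yg /intv ha.
  have -> : ~~ (c <= c + size w < c + size w)%N && ~~ (c <= (val a).+1 < c + size w)%N.
    rewrite ltnn andbF /=; apply/negP => /andP [_]; rewrite /= ha; lia.
  congr Some.
  apply: functional_extensionality => x; rewrite /addS /intv.
  case: eqP => [->|/eqP xa] /=; first by rewrite leq_addr /=; lia.
  move/eqP: xa; lia.
Qed.

End Chain.

Section ChainPd.
Variable k : fieldType.
Variable n : nat.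

Definition lamI (a0 : nat) : pt k n.-1 := fun j i => if (val i == a0 + j)%N then 1 else 0.
Definition lamD (b : nat) : pt k n.-1 := fun j i => if (val i + j == b)%N then 1 else 0.

Lemma evalw_I a0 s (w : seq 'I_(n.-1)) :
  evalw (lamI a0) s w = if map val w == rev (iota (a0 + s) (size w)) then 1 else 0.
Proof.
elim: w => [|x w IH] //=.
rewrite IH rev_iotaS eqseq_cons /lamI addnA.
by case: eqP; case: eqP; rewrite ?mulr1 ?mulr0 ?mul0r.
Qed.

Lemma evalw_D b s (w : seq 'I_(n.-1)) : (s + size w <= b.+1)%N ->
  evalw (lamD b) s w = if map val w == iota (b.+1 - (s + size w)) (size w) then 1 else 0.
Proof.
elim: w => [|x w IH] //= h.
rewrite IH; last by lia.
have -> : (b.+1 - (s + (size w).+1))%N.+1 = (b.+1 - (s + size w))%N by lia.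
rewrite eqseq_cons /lamD.
have -> : (val x + (s + size w) == b) = (val x == b.+1 - (s + (size w).+1))%N.
  by apply/eqP/eqP; lia.
by case: eqP; case: eqP; rewrite ?mulr1 ?mulr0 ?mul0r.
Qed.

Lemma chainI_Pd a0 d : (a0 + d <= n.-1)%N -> Pd (@An_rel k n) d (lamI a0).
Proof.
move=> h; apply: Pd_of_psi.
  move=> j hj; have hl : (a0 + j < n.-1)%N by lia.
  by exists (Ordinal hl); rewrite /lamI /= eqxx oner_neq0.
move=> s t hst; exists (psiC k (intv (a0 + s) (a0 + s + t)) false); split.
  exact: psiC_kills.
move=> w hw; rewrite evalw_I /psiC /Gind.
case: excluded_middle_informative => [E|NE]; case: eqP => // E'.
- by exfalso; apply: E'; apply/(chain_act w (a0 + s)); rewrite hw.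
- by exfalso; apply: NE; rewrite -hw; apply/chain_act.
Qed.

Lemma chainD_Pd b d : (d <= b.+1)%N -> (b < n.-1)%N -> Pd (@An_rel k n) d (lamD b).
Proof.
move=> h1 h2; apply: Pd_of_psi.
  move=> j hj; have hl : (b - j < n.-1)%N by lia.
  exists (Ordinal hl); rewrite /lamD /=.
  have -> : (b - j + j == b)%N by apply/eqP; lia.
  exact: oner_neq0.
move=> s t hst; exists (psiC k (intv (b.+1 - (s + t)) (b.+1 - (s + t) + t)) true); split.
  exact: psiC_kills.
move=> w hw; rewrite evalw_D ?hw; last by lia.
rewrite /psiC /Gind -map_rev.
case: excluded_middle_informative => [E|NE]; case: eqP => // E'.
- exfalso; apply: E'.
  have := (chain_act (rev w) (b.+1 - (s + t))).1; rewrite size_rev hw => /(_ E).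
  by rewrite map_rev => /(congr1 rev); rewrite !revK.
- exfalso; apply: NE.
  have := (chain_act (rev w) (b.+1 - (s + t))).2; rewrite size_rev hw; apply.
  by rewrite map_rev E'.
Qed.

End ChainPd.

Section Classify.
Variable k : fieldType.
Variable n : nat.
Variable d : nat.
Variable lam : pt k n.-1.
Hypothesis HP : Pd (@An_rel k n) d lam.

Local Notation L := (lamN lam).

Lemma Q1nz j x : (j + 2 <= d)%N -> L j x != 0 -> L j.+1 x = 0.
Proof.
move=> hj nz; have := eqQ1 HP x hj; move/eqP; rewrite mulf_eq0 (negbTE nz) orbF.
by move/eqP.
Qed.

Lemma adj j x y : (j + 2 <= d)%N -> L j x != 0 -> L j.+1 y != 0 ->
  y = x.+1 \/ x = y.+1.
Proof.
move=> hj nx ny.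
have z1 := Q1nz hj nx.
case: (ltngtP x y) => hxy.
- case: (eqVneq y x.+1) => [->|ne]; first by left.
  have h2 : (x.+2 <= y)%N by move/eqP: ne; lia.
  have := eqQ2 HP hj h2; rewrite z1 mul0r => /esym/eqP; rewrite mulf_eq0 (negbTE ny) (negbTE nx).
  by [].
- case: (eqVneq x y.+1) => [->|ne]; first by right.
  have h2 : (y.+2 <= x)%N by move/eqP: ne; lia.
  have := eqQ2 HP hj h2; rewrite z1 mul0r => /eqP; rewrite mulf_eq0 (negbTE ny) (negbTE nx).
  by [].
- by move: ny; rewrite -hxy z1 eqxx.
Qed.

Lemma triple j x y z : (j + 3 <= d)%N -> L j x != 0 -> L j.+1 y != 0 -> L j.+2 z != 0 ->
  (y = x.+1 /\ z = x.+2) \/ (x = y.+1 /\ y = z.+1).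
Proof.
move=> hj nx ny nz.
have [e1|e1] := adj (j:=j) ltac:(lia) nx ny; have [e2|e2] := adj (j:=j.+1) ltac:(lia) ny nz.
- by left; subst.
- exfalso; subst y; have ex : z = x by lia. subst z.
  have := eqB HP x hj; rewrite (Q1nz (j:=j) ltac:(lia) nx) mulr0 mul0r => /eqP.
  by rewrite !mulf_eq0 (negbTE nx) (negbTE ny) (negbTE nz).
- exfalso; subst x; have ez : z = y.+1 by lia. subst z.
  have := eqB HP y hj; rewrite (Q1nz (j:=j) ltac:(lia) nx) mulr0 mul0r => /esym/eqP.
  by rewrite !mulf_eq0 (negbTE nx) (negbTE ny) (negbTE nz).
- by right; subst.
Qed.

Hypothesis nz : nonzero_pt d lam.

Lemma exsupp j : (j < d)%N -> exists x, L j x != 0.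
Proof. by move=> hj; have [i hi] := nz hj; exists (val i); rewrite lamN_val. Qed.

Lemma classifyI x0 x1 : (3 <= d)%N -> L 0 x0 != 0 -> L 1 x1 != 0 -> x1 = x0.+1 ->
  forall j, (j < d)%N -> forall x, L j x != 0 -> x = (x0 + j)%N.
Proof.
move=> hd n0 n1 e1.
suff H : forall j, (j.+1 < d)%N -> (forall x, L j x != 0 -> x = (x0 + j)%N) /\
                                   (forall x, L j.+1 x != 0 -> x = (x0 + j.+1)%N).
  move=> j hj x hx; case: j hj hx => [|j] hj hx.
    by apply: (H 0%N ltac:(lia)).1.
  by apply: (H j ltac:(lia)).2.
elim=> [|j IH] hj.
- have [z hz] := exsupp (j:=2) ltac:(lia).
  split=> x hx.
  + have := triple (j:=0) ltac:(lia) hx n1 hz;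
    have := triple (j:=0) ltac:(lia) n0 n1 hz; lia.
  + have := triple (j:=0) ltac:(lia) n0 hx hz;
    have := triple (j:=0) ltac:(lia) n0 n1 hz; lia.
- have [IH1 IH2] := IH ltac:(lia); split=> // x hx.
  have [u hu] := exsupp (j:=j) ltac:(lia).
  have [v hv] := exsupp (j:=j.+1) ltac:(lia).
  have := IH1 _ hu; have := IH2 _ hv.
  have := triple (j:=j) ltac:(lia) hu hv hx; lia.
Qed.

Lemma classifyD x0 x1 : (3 <= d)%N -> L 0 x0 != 0 -> L 1 x1 != 0 -> x0 = x1.+1 ->
  forall j, (j < d)%N -> forall x, L j x != 0 -> (x + j)%N = x0.
Proof.
move=> hd n0 n1 e1.
suff H : forall j, (j.+1 < d)%N -> (forall x, L j x != 0 -> (x + j)%N = x0) /\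
                                   (forall x, L j.+1 x != 0 -> (x + j.+1)%N = x0).
  move=> j hj x hx; case: j hj hx => [|j] hj hx.
    by apply: (H 0%N ltac:(lia)).1.
  by apply: (H j ltac:(lia)).2.
elim=> [|j IH] hj.
- have [z hz] := exsupp (j:=2) ltac:(lia).
  split=> x hx.
  + have := triple (j:=0) ltac:(lia) hx n1 hz;
    have := triple (j:=0) ltac:(lia) n0 n1 hz; lia.
  + have := triple (j:=0) ltac:(lia) n0 hx hz;
    have := triple (j:=0) ltac:(lia) n0 n1 hz; lia.
- have [IH1 IH2] := IH ltac:(lia); split=> // x hx.
  have [u hu] := exsupp (j:=j) ltac:(lia).
  have [v hv] := exsupp (j:=j.+1) ltac:(lia).
  have := IH1 _ hu; have := IH2 _ hv.
  have := triple (j:=j) ltac:(lia) hu hv hx; lia.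
Qed.

End Classify.

Lemma pequiv_nz (k : fieldType) r d (lam mu : pt k r) j i : pequiv d lam mu -> (j < d)%N ->
  (mu j i != 0) = (lam j i != 0).
Proof. by move=> P hj; have [c [c0 ->]] := P j hj; rewrite mulf_eq0 (negbTE c0). Qed.

Section Main3.
Variable k : fieldType.
Variable n : nat.

Lemma classify d (lam : pt k n.-1) : (3 <= d)%N -> Pd (@An_rel k n) d lam ->
  (exists a0, (a0 + d <= n.-1)%N /\ pequiv d (@lamI k n a0) lam) \/
  (exists b, (d <= b.+1)%N /\ (b < n.-1)%N /\ pequiv d (@lamD k n b) lam).
Proof.
move=> hd HP; have nz := HP.1.
have [x0 h0] := exsupp nz (j:=0) ltac:(lia).
have [x1 h1] := exsupp nz (j:=1) ltac:(lia).
have [e|e] := adj HP (j:=0) ltac:(lia) h0 h1.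
- have C := classifyI HP nz hd h0 h1 e.
  left; exists x0; split.
    have [o ho] := nz d.-1 ltac:(lia).
    have := C d.-1 ltac:(lia) (nat_of_ord o); rewrite lamN_val => /(_ ho).
    have := ltn_ord o; lia.
  move=> j hj; have [o ho] := nz j hj.
  have eo := C j hj (nat_of_ord o); rewrite lamN_val in eo; have {}eo := eo ho.
  exists (lam j o); split=> // i; rewrite /lamI.
  case: eqP => [ei|ne]; first by rewrite mulr1; congr lam; apply: val_inj; rewrite /= ei eo.
  rewrite mulr0; apply/eqP; apply/negPn/negP => nz'.
  by apply: ne; have := C j hj (nat_of_ord i); rewrite lamN_val => /(_ nz').
- have C := classifyD HP nz hd h0 h1 e.
  right; exists x0; split; [|split].
  + have [o ho] := nz d.-1 ltac:(lia).
    have := C d.-1 ltac:(lia) (nat_of_ord o); rewrite lamN_val => /(_ ho); lia.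
  + have := C 0%N ltac:(lia) x0 h0; have := ltn_ord (Ordinal (ltn_ord (@ord0 0))).
    case: (ltnP x0 n.-1) => // hx; by move: h0; rewrite lamN_out ?eqxx.
  move=> j hj; have [o ho] := nz j hj.
  have eo := C j hj (nat_of_ord o); rewrite lamN_val in eo; have {}eo := eo ho.
  exists (lam j o); split=> // i; rewrite /lamD.
  case: eqP => [ei|ne]; first by rewrite mulr1; congr lam; apply: val_inj; apply/eqP; rewrite /= -(eqn_add2r j) ei eo.
  rewrite mulr0; apply/eqP; apply/negPn/negP => nz'.
  by apply: ne; have := C j hj (nat_of_ord i); rewrite lamN_val => /(_ nz').
Qed.

Definition chainL (d a : nat) : pt k n.-1 :=
  if (a < n - d)%N then @lamI k n a else @lamD k n (a - (n - d) + d.-1).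

Lemma chainL_Pd d a : (2 <= d <= n - 1)%N -> (a < 2 * n - 2 * d)%N ->
  Pd (@An_rel k n) d (chainL d a).
Proof.
move=> /andP [hd1 hd2] ha; rewrite /chainL; case: ifP => h.
  by apply: chainI_Pd; lia.
by apply: chainD_Pd; lia.
Qed.

Definition fL (d a j : nat) : nat :=
  if (a < n - d)%N then (a + j)%N else (a - (n - d) + d.-1 - j)%N.

Lemma chainL_supp d a j (i : 'I_(n.-1)) : (j <= 1)%N -> (2 <= d)%N ->
  (chainL d a j i != 0) = (nat_of_ord i == fL d a j).
Proof.
move=> hj hd; have vi : val i = nat_of_ord i := erefl.
rewrite /chainL /fL; case: ifP => h.
  by rewrite /lamI; case: ifP => e; rewrite ?oner_neq0 ?eqxx.
rewrite /lamD; case: ifP => e; rewrite ?oner_neq0 ?eqxx /=.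
  by apply/esym/eqP; move/eqP: e; lia.
by apply/esym/negbTE/eqP; move/negbT/eqP: e; lia.
Qed.

Lemma chainL_inj d a b : (2 <= d <= n - 1)%N -> (a < 2 * n - 2 * d)%N -> (b < 2 * n - 2 * d)%N ->
  pequiv d (chainL d a) (chainL d b) -> a = b.
Proof.
move=> /andP [hd1 hd2] ha hb P.
have E : forall j, (j <= 1)%N -> fL d a j = fL d b j.
  move=> j hj; have hl : (fL d a j < n.-1)%N by rewrite /fL; case: ifP; lia.
  have hjd : (j < d)%N by lia.
  have := pequiv_nz (Ordinal hl) P hjd.
  by rewrite !chainL_supp //= eqxx => /eqP.
have := E 0%N erefl; have := E 1%N erefl; rewrite /fL.
case: ifP; case: ifP; lia.
Qed.

Lemma npoints3 d : (3 <= d <= n - 1)%N -> has_npoints d (Pd_An k n d) (2 * n - 2 * d).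
Proof.
move=> hd; have /andP [hd1 hd2] := hd.
have hd' : (2 <= d <= n - 1)%N by apply/andP; split; lia.
exists (fun a : 'I_(2 * n - 2 * d) => chainL d a); split; [|split].
- by move=> a; apply: chainL_Pd.
- by move=> a b P; apply: val_inj; apply: (chainL_inj hd' (ltn_ord a) (ltn_ord b) P).
- move=> lam HP; have [[a0 [h1 h2]]|[b [h1 [h2 h3]]]] := classify (d:=d) ltac:(lia) HP.
  + have ha : (a0 < 2 * n - 2 * d)%N by lia.
    exists (Ordinal ha); rewrite /chainL /=; case: ifP => //; lia.
  + have ha : (b - d.-1 + (n - d) < 2 * n - 2 * d)%N by lia.
    exists (Ordinal ha); rewrite /chainL /=; case: ifP => h; first by lia.
    by have -> : (b - d.-1 + (n - d) - (n - d) + d.-1)%N = b by lia.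
Qed.

Lemma npoints_big d : (3 <= n)%N -> (n <= d)%N -> has_npoints d (Pd_An k n d) 0.
Proof.
move=> hn hd; exists (fun _ => fun _ _ => 0); split; [|split].
- by case.
- by case.
- move=> lam HP; exfalso.
  have [[a0 [h1 h2]]|[b [h1 [h2 h3]]]] := classify (d:=d) ltac:(lia) HP; lia.
Qed.

End Main3.

Lemma FKrel_size2 (k : fieldType) n (r : ncpoly k (FKgen n)) : FKrel r ->
  forall cr, cr \in r -> size cr.2 = 2%N.
Proof.
move=> [[i [j [h ->]]] | [[i [j [a [b [h1 [h2 [hd ->]]]]]]] | [[i [j [l [h1 [h2 ->]]]]] | [i [j [l [h1 [h2 ->]]]]]]]].
- have [g [vg ->]] := xg_some2 k h.
  by move=> cr; rewrite /ncmul /= inE => /eqP ->.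
- have [g [vg ->]] := xg_some2 k h1.
  have [g' [vg' ->]] := xg_some2 k h2.
  by move=> cr; rewrite /ncsub /ncopp /ncmul /= !inE => /orP [] /eqP ->.
- case/andP: (h1) => hij hjl.
  have [g1 [v1 ->]] := xg_some2 k (n:=n) (i:=i) (j:=j) ltac:(apply/andP; split; lia).
  have [g2 [v2 ->]] := xg_some2 k (n:=n) (i:=j) (j:=l) ltac:(apply/andP; split; lia).
  have [g3 [v3 ->]] := xg_some2 k (n:=n) (i:=i) (j:=l) ltac:(apply/andP; split; lia).
  by move=> cr; rewrite /ncsub /ncopp /ncmul /= !inE => /or3P [] /eqP ->.
- case/andP: (h1) => hij hjl.
  have [g1 [v1 ->]] := xg_some2 k (n:=n) (i:=i) (j:=j) ltac:(apply/andP; split; lia).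
  have [g2 [v2 ->]] := xg_some2 k (n:=n) (i:=j) (j:=l) ltac:(apply/andP; split; lia).
  have [g3 [v3 ->]] := xg_some2 k (n:=n) (i:=i) (j:=l) ltac:(apply/andP; split; lia).
  by move=> cr; rewrite /ncsub /ncopp /ncmul /= !inE => /or3P [] /eqP ->.
Qed.

Lemma kills_small (k : fieldType) n (psi : seq (FKgen n) -> k) :
  (forall W, (2 <= size W)%N -> psi W = 0) -> kills (@FKrel k n) psi.
Proof.
move=> H r Hr U V; rewrite big1_seq // => cr /andP [_ cri].
rewrite H ?mulr0 // !size_cat (FKrel_size2 Hr cri); lia.
Qed.

Lemma kills_two (k : fieldType) n (psi : seq (FKgen n) -> k) :
  (forall W, (3 <= size W)%N -> psi W = 0) ->
  (forall r, FKrel r -> \sum_(cr <- r) cr.1 * psi cr.2 = 0) -> kills (@FKrel k n) psi.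
Proof.
move=> H K r Hr U V.
case: U => [|u U]; case: V => [|v V].
- by under eq_bigr do rewrite cats0; apply: K.
- rewrite big1_seq // => cr /andP [_ cri].
  rewrite H ?mulr0 // !size_cat (FKrel_size2 Hr cri) /=; lia.
- rewrite big1_seq // => cr /andP [_ cri].
  rewrite H ?mulr0 // /= !size_cat (FKrel_size2 Hr cri) /=; lia.
- rewrite big1_seq // => cr /andP [_ cri].
  rewrite H ?mulr0 // /= !size_cat (FKrel_size2 Hr cri) /=; lia.
Qed.

Section Deg2.
Variable k : fieldType.
Variable n : nat.
Variable lam : pt k n.-1.
Local Notation L := (lamN lam).
Hypothesis HQ1 : forall i, L 1 i * L 0 i = 0.
Hypothesis HQ2 : forall a b, (a.+2 <= b)%N -> L 1 a * L 0 b = L 1 b * L 0 a.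

Definition Psi2N (x1 x2 y1 y2 : nat) : k :=
  if (x2 == x1.+1) && (y2 == y1.+1) then L 1 x1 * L 0 y1
  else if (x2 == y2) && (y1 < x1)%N then
    (if (x1 == y1.+1) && (x2 == x1.+1) then L 1 y1 * L 0 x1 else 0)
  else if (x2 == y2) && (x1 < y1)%N then
    (if (y1 == x1.+1) && (y2 == y1.+1) then L 1 y1 * L 0 x1 else 0)
  else 0.

Definition psi2 (W : seq (FKgen n)) : k :=
  if W is [:: g; h] then Psi2N (val g).1 (val g).2 (val h).1 (val h).2 else 0.

Lemma psi2_rel (r : ncpoly k (FKgen n)) : FKrel r -> \sum_(cr <- r) cr.1 * psi2 cr.2 = 0.
Proof.
move=> [[i [j [h ->]]] | [[i [j [a [b [h1 [h2 [hd ->]]]]]]] | [[i [j [l [h1 [h2 ->]]]]] | [i [j [l [h1 [h2 ->]]]]]]]].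
- have [g [vg ->]] := xg_some2 k h.
  rewrite /ncmul /= big_cons big_nil /= /psi2 /= vg /Psi2N /= eqxx ltnn !andbF.
  by case: ifP => [/andP [/eqP -> _]|_]; rewrite ?HQ1; ring.
- have [g [vg ->]] := xg_some2 k h1.
  have [g' [vg' ->]] := xg_some2 k h2.
  case/and4P: hd => ia ib ja jb.
  rewrite /ncsub /ncopp /ncmul /= !big_cons big_nil /= /psi2 /= vg vg' /Psi2N /=.
  have fjb : (j == b) = false by apply/eqP => e; move: jb; rewrite e eqxx.
  have fbj : (b == j) = false by apply/eqP => e; move: jb; rewrite e eqxx.
  rewrite fjb fbj /=.
  case: (eqVneq j i.+1) => [ej|nj]; case: (eqVneq b a.+1) => [eb|nb] /=; try ring.
  subst j b; case: (ltngtP i a) => hia.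
  + rewrite HQ2; first ring.
    by apply: contraNT ja => hh; apply/eqP; lia.
  + rewrite (HQ2 (a:=a) (b:=i)); first ring.
    by apply: contraNT ib => hh; apply/eqP; lia.
  + by move: ia; rewrite hia eqxx.
- case/andP: (h1) => hij hjl.
  have [g1 [v1 ->]] := xg_some2 k (n:=n) (i:=i) (j:=j) ltac:(apply/andP; split; lia).
  have [g2 [v2 ->]] := xg_some2 k (n:=n) (i:=j) (j:=l) ltac:(apply/andP; split; lia).
  have [g3 [v3 ->]] := xg_some2 k (n:=n) (i:=i) (j:=l) ltac:(apply/andP; split; lia).
  rewrite /ncsub /ncopp /ncmul /= !big_cons big_nil /= /psi2 /= v1 v2 v3 /Psi2N /=.
  have f1 : (j == l) = false by apply/eqP; lia.
  have f2 : (l == i.+1) = false by apply/eqP; lia.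
  have f3 : (l == j) = false by apply/eqP; lia.
  rewrite f1 f2 f3 hij eqxx /= !andbF /=.
  by case: ifP => _; ring.
- case/andP: (h1) => hij hjl.
  have [g1 [v1 ->]] := xg_some2 k (n:=n) (i:=i) (j:=j) ltac:(apply/andP; split; lia).
  have [g2 [v2 ->]] := xg_some2 k (n:=n) (i:=j) (j:=l) ltac:(apply/andP; split; lia).
  have [g3 [v3 ->]] := xg_some2 k (n:=n) (i:=i) (j:=l) ltac:(apply/andP; split; lia).
  rewrite /ncsub /ncopp /ncmul /= !big_cons big_nil /= /psi2 /= v1 v2 v3 /Psi2N /=.
  have f1 : (j == l) = false by apply/eqP; lia.
  have f2 : (l == i.+1) = false by apply/eqP; lia.
  have f3 : (l == j) = false by apply/eqP; lia.
  have f4 : (j < i)%N = false by apply/negbTE; rewrite -leqNgt; lia.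
  rewrite f1 f2 f3 f4 hij eqxx /= !andbF /=.
  by case: (j == i.+1); case: (l == j.+1) => /=; ring.
Qed.

Lemma Pd2_of_eqs : nonzero_pt 2 lam -> Pd (@An_rel k n) 2 lam.
Proof.
move=> nz; apply: Pd_of_psi => // s t hst.
case: t hst => [|[|[|t]]] hst; last by lia.
- exists (fun W : seq (FKgen n) => if W is [::] then (1 : k) else 0); split.
    by apply: kills_small => -[].
  by case.
- exists (fun W : seq (FKgen n) => if W is [:: g] then
     (if (val g).2 == (val g).1.+1 then L s (val g).1 else 0) else (0 : k)); split.
    by apply: kills_small => -[|? [|]].
  case=> [|x [|]] //= _; by rewrite eqxx lamN_val addn0 mulr1.
- have s0 : s = 0%N by lia.
  subst s; exists psi2; split.
    apply: kills_two; last exact: psi2_rel.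
    by move=> [|? [|? [|]]].
  case=> [|x [|y [|]]] //= _.
  by rewrite /psi2 /Psi2N /= !eqxx /= !lamN_val mulr1.
Qed.

End Deg2.

Lemma Pd2_iff (k : fieldType) n (lam : pt k n.-1) :
  Pd (@An_rel k n) 2 lam <->
  [/\ nonzero_pt 2 lam, forall i, lamN lam 1 i * lamN lam 0 i = 0 &
      forall a b, (a.+2 <= b)%N -> lamN lam 1 a * lamN lam 0 b = lamN lam 1 b * lamN lam 0 a].
Proof.
split.
  move=> HP; split; first exact: HP.1.
    by move=> i; apply: (eqQ1 HP).
  by move=> a b hab; apply: (eqQ2 HP).
by case=> nz H1 H2; apply: Pd2_of_eqs.
Qed.

Section Supp2.
Variable k : fieldType.
Variable n : nat.

Definition ADJ (lam : pt k n.-1) := forall x y, lamN lam 0 x != 0 -> lamN lam 1 y != 0 ->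
  y = x.+1 \/ x = y.+1.

Lemma Pd2_of_adj (lam : pt k n.-1) : nonzero_pt 2 lam -> ADJ lam -> Pd (@An_rel k n) 2 lam.
Proof.
move=> nz A; apply: Pd2_of_eqs => //.
- move=> i; apply/eqP; rewrite mulf_eq0; apply/negPn/negP => /norP [h1 h0].
  have := A i i h0 h1; lia.
- move=> a b hab.
  have -> : lamN lam 1 a * lamN lam 0 b = 0.
    apply/eqP; rewrite mulf_eq0; apply/negPn/negP => /norP [h1 h0].
    have := A b a h0 h1; lia.
  apply/esym/eqP; rewrite mulf_eq0; apply/negPn/negP => /norP [h1 h0].
  have := A a b h0 h1; lia.
Qed.

Lemma adj_of_Pd2 (lam : pt k n.-1) : Pd (@An_rel k n) 2 lam -> ADJ lam.
Proof. by move=> HP x y hx hy; apply: (adj HP (j:=0)). Qed.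

Definition ee (x : nat) : 'I_(n.-1) -> k := fun i => if (nat_of_ord i == x) then 1 else 0.

Lemma single_eq (lam : pt k n.-1) j c : (forall i, lam j i != 0 -> nat_of_ord i = c) ->
  (exists i, lam j i != 0) -> exists c0 : k, c0 != 0 /\ forall i, lam j i = c0 * ee c i.
Proof.
move=> H [i0 h0]; exists (lam j i0); split=> // i.
have e0 := H i0 h0; rewrite /ee; case: eqP => e.
  by rewrite mulr1; congr lam; apply: val_inj; rewrite /= e e0.
rewrite mulr0; apply/eqP; apply/negPn/negP => hi; exact: (e (H i hi)).
Qed.

Lemma pair_eq (lam : pt k n.-1) j c : (1 <= c)%N ->
  (forall i, lam j i != 0 -> (nat_of_ord i).+1 = c \/ nat_of_ord i = c.+1) ->
  forall i, lam j i = 1 * (lamN lam j c.-1 * ee c.-1 i + lamN lam j c.+1 * ee c.+1 i).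
Proof.
move=> hc H i; rewrite mul1r /ee.
case: (eqVneq (nat_of_ord i) c.-1) => [e|ne].
  rewrite -e lamN_val mulr1 ifN_eq ?mulr0 ?addr0 //; rewrite e; apply/eqP; lia.
case: (eqVneq (nat_of_ord i) c.+1) => [e|ne'].
  by rewrite -e lamN_val mulr1 mulr0 add0r.
rewrite !mulr0 addr0; apply/eqP; apply/negPn/negP => hi.
have := H i hi; move/eqP: ne; move/eqP: ne'; lia.
Qed.

Lemma pair_nz (lam : pt k n.-1) j c : (1 <= c)%N ->
  (forall i, lam j i != 0 -> (nat_of_ord i).+1 = c \/ nat_of_ord i = c.+1) ->
  (exists i, lam j i != 0) -> lamN lam j c.-1 != 0 \/ lamN lam j c.+1 != 0.
Proof.
move=> hc H [i hi]; have := H i hi => -[e|e].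
  left; have -> : c.-1 = nat_of_ord i by lia.
  by rewrite lamN_val.
by right; rewrite -e lamN_val.
Qed.

End Supp2.

Section Lines.
Variable k : fieldType.
Variable n : nat.
Hypothesis hn : (3 < n)%N.

Definition famA (a : nat) := (a < n - 3)%N.
Definition cc (a : nat) := if famA a then a.+1 else (a - (n - 3)).+1.
Definition lU (a : nat) : pt k n.-1 := fun j =>
  if famA a then (if j == 0%N then @ee k n (cc a) else @ee k n (cc a).-1)
  else (if j == 0%N then @ee k n (cc a).-1 else @ee k n (cc a)).
Definition lV (a : nat) : pt k n.-1 := fun _ => @ee k n (cc a).+1.
Definition lC (a : nat) : nat -> bool := fun j => if famA a then j == 0%N else j == 1%N.

Lemma cc_range a : (a < 2 * n - 6)%N -> (1 <= cc a)%N /\ ((cc a).+1 < n.-1)%N.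
Proof. by rewrite /cc /famA; case: ifP; lia. Qed.

Lemma ee_nz x (i : 'I_(n.-1)) : (@ee k n x i != 0) = (nat_of_ord i == x).
Proof. by rewrite /ee; case: ifP; rewrite ?oner_neq0 ?eqxx. Qed.

Lemma good a : (a < 2 * n - 6)%N -> good_line 2 (lU a) (lV a) (lC a).
Proof.
move=> ha; have [c1 c2] := cc_range ha.
have cst : exists i, @ee k n (cc a) i != 0.
  have hl : (cc a < n.-1)%N by lia.
  by exists (Ordinal hl); rewrite ee_nz /=.
have li : lin_indep (@ee k n (cc a).-1) (@ee k n (cc a).+1).
  move=> al be H.
  have hl1 : ((cc a).-1 < n.-1)%N by lia.
  have hl2 : ((cc a).+1 < n.-1)%N by lia.
  have := H (Ordinal hl1); have := H (Ordinal hl2).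
  rewrite /ee /= !eqxx ifN_eq; last by apply/eqP; lia.
  rewrite ifN_eq; last by apply/eqP; lia.
  by rewrite !mulr0 !mulr1 add0r addr0 => -> ->.
split.
  by move=> j hj; rewrite /lC /lU /lV; case: (famA a); case: j hj => [|[|]] //= _.
by rewrite /lC; case: (famA a); [exists 1%N | exists 0%N].
Qed.

Definition mu (a : nat) (s t : k) : pt k n.-1 :=
  fun j i => if lC a j then lU a j i else s * lU a j i + t * lV a j i.

Lemma mu_supp a s t j i : (a < 2 * n - 6)%N -> (j < 2)%N -> mu a s t j i != 0 ->
  if (famA a && (j == 0%N)) || (~~ famA a && (j == 1%N)) then nat_of_ord i = cc a
  else (nat_of_ord i).+1 = cc a \/ nat_of_ord i = (cc a).+1.
Proof.
move=> ha hj; have [c1 c2] := cc_range ha.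
have pairP : s * @ee k n (cc a).-1 i + t * @ee k n (cc a).+1 i != 0 ->
   (nat_of_ord i).+1 = cc a \/ nat_of_ord i = (cc a).+1.
  rewrite /ee; case: (eqVneq (nat_of_ord i) (cc a).-1) => [e|_]; first by left; lia.
  by case: (eqVneq (nat_of_ord i) (cc a).+1) => [e|_]; [right | rewrite !mulr0 addr0 eqxx].
rewrite /mu /lC /lU /lV; case: (famA a); case: j hj => [|[|]] //= _.
all: move=> h; first [by move: h; rewrite ee_nz => /eqP | by apply: pairP].
Qed.

Lemma on_line_supp a lam : (a < 2 * n - 6)%N -> on_line 2 (lU a) (lV a) (lC a) lam ->
  forall j i, (j < 2)%N -> lam j i != 0 ->
  if (famA a && (j == 0%N)) || (~~ famA a && (j == 1%N)) then nat_of_ord i = cc a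
  else (nat_of_ord i).+1 = cc a \/ nat_of_ord i = (cc a).+1.
Proof.
move=> ha [s [t [st P]]] j i hj hi.
apply: (mu_supp (s:=s) (t:=t)) => //.
by rewrite /mu -(pequiv_nz _ P hj).
Qed.

Lemma on_line_nz a lam : (a < 2 * n - 6)%N -> on_line 2 (lU a) (lV a) (lC a) lam ->
  nonzero_pt 2 lam.
Proof.
move=> ha [s [t [st P]]] j hj; have [c1 c2] := cc_range ha.
suff [i hi] : exists i, mu a s t j i != 0.
  by exists i; rewrite (pequiv_nz _ P hj).
have h0 : (cc a < n.-1)%N by lia.
have h1 : ((cc a).-1 < n.-1)%N by lia.
have h2 : ((cc a).+1 < n.-1)%N by lia.
have pairE : exists i, s * @ee k n (cc a).-1 i + t * @ee k n (cc a).+1 i != 0.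
  case: st => [s0|t0].
    exists (Ordinal h1); rewrite /ee /= eqxx ifN_eq ?mulr1 ?mulr0 ?addr0 //; apply/eqP; lia.
  exists (Ordinal h2); rewrite /ee /= eqxx ifN_eq ?mulr1 ?mulr0 ?add0r //; apply/eqP; lia.
rewrite /mu /lC /lU /lV; case: (famA a); case: j hj => [|[|]] //= _.
all: by exists (Ordinal h0); rewrite ee_nz /=.
Qed.

Lemma on_line_Pd a lam : (a < 2 * n - 6)%N -> on_line 2 (lU a) (lV a) (lC a) lam ->
  Pd (@An_rel k n) 2 lam.
Proof.
move=> ha L; apply: Pd2_of_adj; first exact: on_line_nz L.
move=> x y hx hy.
case: (ltnP x n.-1) => hxn; last by move: hx; rewrite lamN_out ?eqxx.
case: (ltnP y n.-1) => hyn; last by move: hy; rewrite lamN_out ?eqxx.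
have := on_line_supp ha L (j:=0) (i:=Ordinal hxn) erefl; rewrite -lamN_val /= => /(_ hx).
have := on_line_supp ha L (j:=1) (i:=Ordinal hyn) erefl; rewrite -lamN_val /= => /(_ hy).
by case: (famA a) => /=; lia.
Qed.

End Lines.


Section Lines2.
Variable k : fieldType.
Variable n : nat.
Hypothesis hn : (3 < n)%N.

Lemma lineA_on c (lam : pt k n.-1) : (1 <= c)%N -> (c.+1 < n.-1)%N ->
  (forall i, lam 0%N i != 0 -> nat_of_ord i = c) ->
  (forall i, lam 1%N i != 0 -> (nat_of_ord i).+1 = c \/ nat_of_ord i = c.+1) ->
  nonzero_pt 2 lam -> on_line 2 (@lU k n c.-1) (@lV k n c.-1) (lC n c.-1) lam.
Proof.
move=> c1 c2 S0 S1 nz.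
have fa : famA n c.-1 by rewrite /famA; lia.
have ec : cc n c.-1 = c by rewrite /cc fa; lia.
exists (lamN lam 1 c.-1), (lamN lam 1 c.+1); split.
  by apply: pair_nz => //; apply: nz.
move=> j hj; rewrite /lC /lU /lV fa ec; case: j hj => [|[|]] //= _.
  by apply: single_eq => //; apply: nz.
by exists 1; split; [exact: oner_neq0 | exact: pair_eq].
Qed.

Lemma lineB_on c (lam : pt k n.-1) : (1 <= c)%N -> (c.+1 < n.-1)%N ->
  (forall i, lam 1%N i != 0 -> nat_of_ord i = c) ->
  (forall i, lam 0%N i != 0 -> (nat_of_ord i).+1 = c \/ nat_of_ord i = c.+1) ->
  nonzero_pt 2 lam ->
  on_line 2 (@lU k n (c.-1 + (n - 3))) (@lV k n (c.-1 + (n - 3))) (lC n (c.-1 + (n - 3))) lam.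
Proof.
move=> c1 c2 S1 S0 nz.
have fa : famA n (c.-1 + (n - 3)) = false by rewrite /famA; apply/negbTE; rewrite -leqNgt; lia.
have ec : cc n (c.-1 + (n - 3)) = c by rewrite /cc fa; lia.
exists (lamN lam 0 c.-1), (lamN lam 0 c.+1); split.
  by apply: pair_nz => //; apply: nz.
move=> j hj; rewrite /lC /lU /lV fa ec; case: j hj => [|[|]] //= _.
  by exists 1; split; [exact: oner_neq0 | exact: pair_eq].
by apply: single_eq => //; apply: nz.
Qed.

Lemma Pd_on_line (lam : pt k n.-1) : Pd (@An_rel k n) 2 lam ->
  exists a : 'I_(2 * n - 6), on_line 2 (@lU k n a) (@lV k n a) (lC n a) lam.
Proof.
move=> HP; have nz := HP.1; have A := adj_of_Pd2 HP.
have AO : forall i i' : 'I_(n.-1), lam 0%N i != 0 -> lam 1%N i' != 0 ->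
    nat_of_ord i' = (nat_of_ord i).+1 \/ nat_of_ord i = (nat_of_ord i').+1.
  by move=> i i' h h'; apply: A; rewrite lamN_val.
have [i0 h0] := nz 0%N erefl; have [i1 h1] := nz 1%N erefl.
have hi0 := ltn_ord i0; have hi1 := ltn_ord i1.
case: (classic (forall i, lam 0%N i != 0 -> nat_of_ord i = i0)) => [S0|NS0].
- have S1 : forall i, lam 1%N i != 0 -> (nat_of_ord i).+1 = i0 \/ nat_of_ord i = (nat_of_ord i0).+1.
    by move=> i hi; have := AO i0 i h0 hi; lia.
  case: (posnP i0) => [e0|p0].
    have hl : (0 + (n - 3) < 2 * n - 6)%N by lia.
    exists (Ordinal hl); apply: (@lineB_on 1) => //=; try lia.
    + by move=> i hi; have := S1 i hi; have := ltn_ord i; lia.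
    + by move=> i hi; have := S0 i hi; lia.
  case: (ltnP (nat_of_ord i0).+1 n.-1) => hr.
    have hl : ((nat_of_ord i0).-1 < 2 * n - 6)%N by lia.
    by exists (Ordinal hl); apply: lineA_on => //; lia.
  have hl : ((n - 3).-1 + (n - 3) < 2 * n - 6)%N by lia.
  exists (Ordinal hl); apply: (@lineB_on (n - 3)) => //=; try lia.
  + by move=> i hi; have := S1 i hi; have := ltn_ord i; lia.
  + by move=> i hi; have := S0 i hi; lia.
- have [i0' [h0' ne]] : exists i, lam 0%N i != 0 /\ nat_of_ord i <> i0.
    apply: NNPP => H; apply: NS0 => i hi; apply: NNPP => ne; apply: H; by exists i.
  have a1 := AO i0 i1 h0 h1; have a1' := AO i0' i1 h0' h1.
  have hi0' := ltn_ord i0'.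
  have hl : ((nat_of_ord i1).-1 + (n - 3) < 2 * n - 6)%N by lia.
  exists (Ordinal hl); apply: lineB_on => //; try lia.
  + move=> i hi; have := AO i0 i h0 hi; have := AO i0' i h0' hi; lia.
  + by move=> i hi; have := AO i i1 hi h1; lia.
Qed.

End Lines2.

Lemma union_main (k : fieldType) n : (3 < n)%N -> union_of_P1s 2 (Pd_An k n 2) (2 * n - 6).
Proof.
move=> hn.
exists (fun a : 'I_(2 * n - 6) => @lU k n a), (fun a => @lV k n a), (fun a => lC n a).
split; [|split].
- by move=> a; apply: good.
- move=> a b E.
  have [c1 c2] := cc_range hn (ltn_ord a).
  pose pa := @mu k n a 1 1.
  have La : on_line 2 (@lU k n a) (@lV k n a) (lC n a) pa.
    exists 1, 1; split; first by left; exact: oner_neq0.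
    by move=> j hj; exists 1; split; [exact: oner_neq0 | move=> i; rewrite mul1r].
  have Lb := (E pa).1 La.
  have Sb := on_line_supp hn (ltn_ord b) Lb.
  have h0 : (cc n a < n.-1)%N by lia.
  have hm : ((cc n a).-1 < n.-1)%N by lia.
  have hp : ((cc n a).+1 < n.-1)%N by lia.
  have em : ((cc n a).-1 == (cc n a).+1) = false by apply/eqP; lia.
  have em' : ((cc n a).+1 == (cc n a).-1) = false by apply/eqP; lia.
  pose o0 := Ordinal h0; pose om := Ordinal hm; pose op := Ordinal hp.
  suff : nat_of_ord a = nat_of_ord b by move=> e; apply: val_inj.
  case fa: (famA n a).
  + have v0 : pa 0%N o0 != 0 by rewrite /pa /mu /lC /lU fa /= ee_nz /=.
    have vm : pa 1%N om != 0.
      by rewrite /pa /mu /lC /lU /lV fa /ee /= eqxx em !mul1r addr0 oner_neq0.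
    have vp : pa 1%N op != 0.
      by rewrite /pa /mu /lC /lU /lV fa /ee /= eqxx em' !mul1r add0r oner_neq0.
    have := Sb 0%N _ erefl v0; have := Sb 1%N _ erefl vm; have := Sb 1%N _ erefl vp.
    rewrite /o0 /om /op /=; rewrite /cc /famA in fa *; rewrite fa /=; case: ltnP => fb /=; lia.
  + have v0 : pa 1%N o0 != 0 by rewrite /pa /mu /lC /lU fa /= ee_nz /=.
    have vm : pa 0%N om != 0.
      by rewrite /pa /mu /lC /lU /lV fa /ee /= eqxx em !mul1r addr0 oner_neq0.
    have vp : pa 0%N op != 0.
      by rewrite /pa /mu /lC /lU /lV fa /ee /= eqxx em' !mul1r add0r oner_neq0.
    have := Sb 1%N _ erefl v0; have := Sb 0%N _ erefl vm; have := Sb 0%N _ erefl vp.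
    rewrite /o0 /om /op /=; rewrite /cc /famA in fa *; rewrite fa /=; case: ltnP => fb /=; lia.
- move=> lam; split; first exact: Pd_on_line.
  by move=> [a L]; apply: (on_line_Pd hn (ltn_ord a) L).
Qed.

Lemma n3_points (k : fieldType) : has_npoints 2 (Pd_An k 3 2) 2.
Proof.
exists (fun a : 'I_2 => @chainL k 3 2 a); split; [|split].
- by move=> a; apply: chainL_Pd => //; exact: ltn_ord.
- move=> a b P; apply: val_inj; exact: (@chainL_inj k 3 2 a b isT (ltn_ord a) (ltn_ord b) P).
- move=> lam HP; have nz := HP.1; have A := adj_of_Pd2 HP.
  have AO : forall i i' : 'I_(3.-1), lam 0%N i != 0 -> lam 1%N i' != 0 ->
      nat_of_ord i' = (nat_of_ord i).+1 \/ nat_of_ord i = (nat_of_ord i').+1.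
    by move=> i i' h h'; apply: A; rewrite lamN_val.
  have [i0 h0] := nz 0%N erefl; have [i1 h1] := nz 1%N erefl.
  have hi0 := ltn_ord i0; have hi1 := ltn_ord i1.
  have S0 : forall i, lam 0%N i != 0 -> nat_of_ord i = i0.
    by move=> i hi; have := AO i i1 hi h1; have := AO i0 i1 h0 h1; have := ltn_ord i; lia.
  have S1 : forall i, lam 1%N i != 0 -> nat_of_ord i = i1.
    by move=> i hi; have := AO i0 i h0 hi; have := AO i0 i1 h0 h1; have := ltn_ord i; lia.
  have [c0 [nc0 E0]] := single_eq S0 (nz 0%N erefl).
  have [c1 [nc1 E1]] := single_eq S1 (nz 1%N erefl).
  have a1 := AO i0 i1 h0 h1.
  case: (posnP i0) => [e0|p0].
  + exists (Ordinal (isT : (0 < 2)%N)) => j hj.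
    case: j hj => [|[|]] // _.
    * by exists c0; split=> // i; rewrite E0 /chainL /lamI /ee /= e0.
    * by exists c1; split=> // i; rewrite E1 /chainL /lamI /ee /=; have -> : nat_of_ord i1 = 1%N by lia.
  + exists (Ordinal (isT : (1 < 2)%N)) => j hj.
    case: j hj => [|[|]] // _.
    * exists c0; split=> // i; rewrite E0 /chainL /lamD /ee /=.
      have -> : nat_of_ord i0 = 1%N by lia.
      by rewrite addn0.
    * exists c1; split=> // i; rewrite E1 /chainL /lamD /ee /=.
      have -> : nat_of_ord i1 = 0%N by lia.
      by case: (nat_of_ord i) => [|[|]].
Qed.


Unset Implicit Arguments.
Local Close Scope ring_scope.

Theorem proposition3p2 (k : closedFieldType) (n : nat) (hn : (3 <= n)%N) :
  (forall d : nat, (3 <= d <= n - 1)%N ->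
     has_npoints d (Pd_An k n d) (2 * n - 2 * d)) /\
  (forall d : nat, (n <= d)%N -> has_npoints d (Pd_An k n d) 0) /\
  ((3 < n)%N -> union_of_P1s 2 (Pd_An k n 2) (2 * n - 6)) /\
  (n = 3 -> has_npoints 2 (Pd_An k n 2) 2).
Proof.
split; [|split; [|split]].
- by move=> d hd; apply: npoints3.
- by move=> d hd; apply: npoints_big.
- by move=> h; apply: union_main.
- by move=> e; subst n; apply: n3_points.
Qed.
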